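(* Let $R$ be a commutative ring. A map $p\colon E\to B$ of DG $R$-modules satisfies the enriched right lifting property against every map $S^{n-1}_R\to D^n_R$, $n\in\mathbb{Z}$, if and only if $p$ is a degreewise $R$-split epimorphism that is a chain homotopy equivalence.
   Context: DG $R$-modules are $\mathbb{Z}$-graded chain complexes of $R$-modules. $S^{n-1}_R$ is $R$ concentrated in degree $n-1$; $D^n_R$ is $R$ in degrees $n$ and $n-1$ with identity differential; $S^{n-1}_R\to D^n_R$ is the inclusion in degree $n-1$. For DG $R$-modules $M,N$, $\mathcal{M}_R(M,N)$ is the $R$-module of chain maps. For $i\colon W\to X$ and $p\colon E\to B$, $\underline{\mathrm{Sq}}(i,p)$ is the pullback of $R$-modules of $p_*\colon \mathcal{M}_R(W,E)\to \mathcal{M}_R(W,B)$ and $i^*\colon \mathcal{M}_R(X,B)\to\mathcal{M}_R(W,B)$. The map $p$ has the enriched right lifting property against $i$ if the induced map $\mathcal{M}_R(X,E)\to\underline{\mathrm{Sq}}(i,p)$ is a split epimorphism of $R$-modules. *)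

(* Defs.v *)
From HB Require Import structures.
From mathcomp Require Import all_boot all_order all_algebra.
Unset Printing Implicit Defensive.
Import Order.TTheory GRing.Theory Num.Theory.
Local Open Scope ring_scope.

Section DG.
Variable R : comPzRingType.

Definition linear_fun {U V : lmodType R} (f : U -> V) : Prop :=
  forall (a : R) (x y : U), f (a *: x + y) = a *: f x + f y.

(* The differential is
   encoded as a family d i j : M i -> M j which vanishes unless j = i - 1
   (so d i (i-1) is the genuine differential M_i -> M_{i-1}). *)
Record DGMod := DGModule {
  dg_obj :> int -> lmodType R;
  dg_d : forall i j : int, dg_obj i -> dg_obj j;
  dg_d_lin : forall i j, linear_fun (dg_d i j);
  dg_d_shape : forall i j x, j != i - 1 -> dg_d i j x = 0;
  dg_dd : forall i j k x, dg_d j k (dg_d i j x) = 0 }.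

Definition gmap (M N : DGMod) := forall k : int, M k -> N k.

Definition is_chain_map {M N : DGMod} (f : gmap M N) : Prop :=
  (forall k, linear_fun (f k)) /\
  (forall k l x, f l (dg_d M k l x) = dg_d N k l (f k x)).

Definition gadd {M N : DGMod} (f g : gmap M N) : gmap M N :=
  fun k x => f k x + g k x.
Definition gscale {M N : DGMod} (a : R) (f : gmap M N) : gmap M N :=
  fun k x => a *: f k x.

Definition in_sq {W X E B : DGMod} (i : gmap W X) (p : gmap E B)
  (u : gmap W E) (v : gmap X B) : Prop :=
  [/\ is_chain_map u, is_chain_map v & forall k x, p k (u k x) = v k (i k x)].

(* p has the enriched right lifting property against i: the R-linear map
   M(X,E) -> Sq(i,p), f |-> (f i, p f), admits an R-linear section s. *)
Definition enriched_rlp {W X E B : DGMod} (i : gmap W X) (p : gmap E B) : Prop :=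
  exists s : gmap W E -> gmap X B -> gmap X E,
    (forall u v, in_sq i p u v ->
       [/\ is_chain_map (s u v),
           (forall k x, s u v k (i k x) = u k x) &
           (forall k x, p k (s u v k x) = v k x)]) /\
    (forall (a : R) u v u' v', in_sq i p u v -> in_sq i p u' v' ->
       forall k x, s (gadd (gscale a u) u') (gadd (gscale a v) v') k x
                   = a *: s u v k x + s u' v' k x).

Definition degreewise_split_epi {E B : DGMod} (p : gmap E B) : Prop :=
  forall k, exists s : B k -> E k, linear_fun s /\ forall y, p k (s y) = y.

Definition gid (M : DGMod) : gmap M M := fun k x => x.
Definition gcomp {L M N : DGMod} (g : gmap M N) (f : gmap L M) : gmap L N :=
  fun k x => g k (f k x).

Definition chain_homotopic {M N : DGMod} (f g : gmap M N) : Prop :=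
  exists h : forall i j : int, M i -> N j,
    (forall i j, linear_fun (h i j)) /\
    (forall i j x, j != i + 1 -> h i j x = 0) /\
    (forall i x, f i x - g i x
                 = dg_d N (i + 1) i (h i (i + 1) x) + h (i - 1) i (dg_d M i (i - 1) x)).

Definition chain_htpy_equiv {M N : DGMod} (p : gmap M N) : Prop :=
  exists q : gmap N M, is_chain_map q /\
    chain_homotopic (gcomp q p) (gid M) /\ chain_homotopic (gcomp p q) (gid N).

(* Sphere S^m_R: R concentrated in degree m (free module 'rV_1, and 'rV_0 = 0
   elsewhere), zero differential. *)
Definition sphere_obj (m : int) (k : int) : lmodType R := 'rV[R]_(k == m).

Lemma sphere_d_lin m i j : linear_fun (fun _ : sphere_obj m i => (0 : sphere_obj m j)).
Proof. by move=> a x y; rewrite scaler0 addr0. Qed.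

Definition sphere (m : int) : DGMod :=
  @DGModule (sphere_obj m) (fun i j _ => 0) (@sphere_d_lin m)
    (fun _ _ _ _ => erefl) (fun _ _ _ _ => erefl).

(* Disk D^n_R: R in degrees n and n-1, differential the identity D_n -> D_{n-1}.
   conform_mx 0 x is x when the dimensions agree (both 1 here). *)
Definition disk_obj (n : int) (k : int) : lmodType R :=
  'rV[R]_((k == n) || (k == n - 1)).

(* the canonical map R^{m1} -> R^{m2}: identity if m1 = m2, zero otherwise *)
Definition cf {m1 m2 : nat} (x : 'rV[R]_m1) : 'rV[R]_m2 := conform_mx 0 x.

Definition disk_d (n : int) (i j : int) (x : disk_obj n i) : disk_obj n j :=
  if (i == n) && (j == n - 1)
  then (cf (x : 'rV[R]_((i == n) || (i == n - 1))) : disk_obj n j)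
  else 0.

Lemma conform_lin m1 n1 m2 n2 (a : R) (x y : 'M[R]_(m1, n1)) :
  conform_mx (0 : 'M[R]_(m2, n2)) (a *: x + y)
  = a *: conform_mx 0 x + conform_mx 0 y.
Proof.
case: (altP (m1 =P m2)) => [e1|ne1].
  case: (altP (n1 =P n2)) => [e2|ne2].
    by subst; rewrite !conform_mx_id.
  by rewrite !nonconform_mx ?ne2 ?orbT // scaler0 addr0.
by rewrite !nonconform_mx ?ne1 // scaler0 addr0.
Qed.

Lemma disk_d_lin n i j : linear_fun (@disk_d n i j).
Proof.
move=> a x y; rewrite /disk_d; case: ifP => _; first exact: conform_lin.
by rewrite scaler0 addr0.
Qed.

Lemma disk_d_shape n i j x : j != i - 1 -> @disk_d n i j x = 0.
Proof.
rewrite /disk_d => H; case: ifP => // /andP [/eqP Ei /eqP Ej]; exfalso.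
by move: H; rewrite Ej Ei eqxx.
Qed.

Lemma conform0 m1 n1 m2 n2 :
  conform_mx (0 : 'M[R]_(m2, n2)) (0 : 'M[R]_(m1, n1)) = 0.
Proof.
case: (altP (m1 =P m2)) => [e1|ne1].
  case: (altP (n1 =P n2)) => [e2|ne2].
    by subst; rewrite !conform_mx_id.
  by rewrite !nonconform_mx ?ne2 ?orbT.
by rewrite !nonconform_mx ?ne1.
Qed.

Lemma disk_dd n i j k x : @disk_d n j k (@disk_d n i j x) = 0.
Proof.
rewrite /disk_d; case: (boolP ((i == n) && (j == n - 1))) => [/andP [_ /eqP Ej]|_].
  case: ifP => // /andP [/eqP H _]; exfalso; move: H; rewrite Ej => /eqP.
  by rewrite -subr_eq0 addrAC subrr add0r oppr_eq0 oner_eq0.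
by case: ifP => // _; exact: conform0.
Qed.

Definition disk (n : int) : DGMod :=
  @DGModule (disk_obj n) (@disk_d n) (@disk_d_lin n) (@disk_d_shape n) (@disk_dd n).

Definition sphere_incl (n : int) : gmap (sphere (n - 1)) (disk n) :=
  fun k x => (cf (x : 'rV[R]_(k == n - 1)) : disk_obj n k).

End DG.

Arguments gmap {R} M N.
Arguments is_chain_map {R M N} f.
Arguments enriched_rlp {R W X E B} i p.
Arguments degreewise_split_epi {R E B} p.
Arguments chain_htpy_equiv {R M N} p.
Arguments chain_homotopic {R M N} f g.
Arguments sphere_incl {R} n.
Arguments sphere {R} m.
Arguments disk {R} n.

(* Main.v *)
Require Import Defs.
From HB Require Import structures.
From mathcomp Require Import all_boot all_order all_algebra.
From Stdlib Require Import ClassicalEpsilon FunctionalExtensionality.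
Import Order.TTheory GRing.Theory Num.Theory.
Local Open Scope ring_scope.

Section Prelim.
Variable R : comPzRingType.
Local Notation dd := (dg_d R).

Section Lin.
Variables (U V W : lmodType R).
Lemma lin0 {f : U -> V} : linear_fun R f -> f 0 = 0.
Proof.
move=> h; have := h (-1) 0 0.
by rewrite scaler0 addr0 scaleN1r addNr => ->.
Qed.
Lemma linD {f : U -> V} : linear_fun R f -> forall x y, f (x + y) = f x + f y.
Proof. by move=> h x y; have := h 1 x y; rewrite !scale1r => ->. Qed.
Lemma linZ {f : U -> V} : linear_fun R f -> forall a x, f (a *: x) = a *: f x.
Proof. by move=> h a x; have := h a x 0; rewrite (lin0 h) !addr0 => ->. Qed.
Lemma linN {f : U -> V} : linear_fun R f -> forall x, f (- x) = - f x.
Proof. by move=> h x; rewrite -scaleN1r linZ // scaleN1r. Qed.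
Lemma linB {f : U -> V} : linear_fun R f -> forall x y, f (x - y) = f x - f y.
Proof. by move=> h x y; rewrite linD // linN. Qed.
Lemma lin_comp (f : V -> W) (g : U -> V) : linear_fun R f -> linear_fun R g ->
  linear_fun R (fun x => f (g x)).
Proof. by move=> hf hg a x y; rewrite hg hf. Qed.
Lemma lin_add (f g : U -> V) : linear_fun R f -> linear_fun R g ->
  linear_fun R (fun x => f x + g x).
Proof.
move=> hf hg a x y; rewrite hf hg scalerDr.
by rewrite addrACA.
Qed.
Lemma lin_opp (f : U -> V) : linear_fun R f -> linear_fun R (fun x => - f x).
Proof. by move=> hf a x y; rewrite hf opprD scalerN. Qed.
Lemma lin_id : linear_fun R (fun x : U => x).
Proof. by []. Qed.
End Lin.
Arguments lin0 {U V f}.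
Arguments linD {U V f}.
Arguments linZ {U V f}.
Arguments linN {U V f}.
Arguments linB {U V f}.

Definition coef {m} (y : 'rV[R]_m) : R := \sum_(i < m) y 0 i.
Lemma coef_lin m a (x y : 'rV[R]_m) : coef (a *: x + y) = a * coef x + coef y.
Proof.
rewrite /coef mulr_sumr -big_split /=; apply: eq_bigr => i _.
by rewrite !mxE.
Qed.
Lemma coef0 m : coef (0 : 'rV[R]_m) = 0.
Proof. by rewrite /coef big1 // => i _; rewrite mxE. Qed.
Lemma coef_const m : coef (const_mx 1 : 'rV[R]_m) = m%:R.
Proof.
rewrite /coef (eq_bigr (fun _ => 1)) => [|i _]; last by rewrite mxE.
by rewrite sumr_const card_ord.
Qed.
Lemma rv_false (b : bool) (y : 'rV[R]_b) : b = false -> y = 0.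
Proof. by case: b y => y // _; apply/matrixP => i []. Qed.
Lemma rv_true (b : bool) (y : 'rV[R]_b) : b -> y = coef y *: const_mx 1.
Proof.
case: b y => y // _; apply/matrixP => i j.
by rewrite !mxE /coef big_ord1 mulr1 !ord1.
Qed.
Lemma coef_cf m1 m2 (y : 'rV[R]_m1) : m1 = m2 -> coef (cf R y : 'rV_m2) = coef y.
Proof. by move=> e; subst; rewrite /cf conform_mx_id. Qed.
Lemma cf_const (b1 b2 : bool) : b1 -> b2 ->
  cf R (const_mx 1 : 'rV[R]_b1) = (const_mx 1 : 'rV[R]_b2).
Proof. by case: b1; case: b2 => // _ _; rewrite /cf conform_mx_id. Qed.
Lemma cf0' m1 m2 : cf R (0 : 'rV[R]_m1) = (0 : 'rV[R]_m2).
Proof. exact: conform0. Qed.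


Lemma eqVneqP (x y : int) : x = y \/ x != y.
Proof. by case: (eqVneq x y); [left|right]. Qed.
Definition tr (M : DGMod R) (i j : int) (x : M i) : M j :=
  match i =P j with ReflectT e => eq_rect i (fun k => M k : Type) x j e | ReflectF _ => 0 end.
Lemma tr_id M i x : tr M i i x = x.
Proof.
rewrite /tr; case: eqP => // e.
by rewrite (eq_axiomK e).
Qed.
Lemma tr_ne M i j x : i != j -> tr M i j x = 0.
Proof. by rewrite /tr; case: eqP. Qed.
Lemma tr_lin M i j : linear_fun R (tr M i j).
Proof.
move=> a x y; case: (eqVneqP i j) => [<-|ne]; first by rewrite !tr_id.
by rewrite !tr_ne // scaler0 addr0.
Qed.

Lemma int_neq1 (n : int) : (n - 1 == n) = false.
Proof. by apply/negbTE; rewrite -subr_eq0 addrAC subrr add0r oppr_eq0 oner_eq0. Qed.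
Lemma int_neq2 (n : int) : (n == n - 1) = false.
Proof. by rewrite eq_sym int_neq1. Qed.


Definition jlin {U1 U2 V : lmodType R} (F : U1 -> U2 -> V) :=
  forall a z b z' b', F (a *: z + z') (a *: b + b') = a *: F z b + F z' b'.
Section JLin.
Variables (U1 U2 V W : lmodType R).
Definition jlin_unused (F : U1 -> U2 -> V) :=
  forall a z b z' b', F (a *: z + z') (a *: b + b') = a *: F z b + F z' b'.
Lemma jlin_add (F G : U1 -> U2 -> V) : jlin F -> jlin G -> jlin (fun z b => F z b + G z b).
Proof. by move=> hF hG a z b z' b'; rewrite hF hG scalerDr addrACA. Qed.
Lemma jlin_opp (F : U1 -> U2 -> V) : jlin F -> jlin (fun z b => - F z b).
Proof. by move=> hF a z b z' b'; rewrite hF opprD scalerN. Qed.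
Lemma jlin_comp (f : V -> W) (F : U1 -> U2 -> V) : linear_fun R f -> jlin F ->
  jlin (fun z b => f (F z b)).
Proof. by move=> hf hF a z b z' b'; rewrite hF hf. Qed.
Lemma jlin_l (f : U1 -> V) : linear_fun R f -> jlin (fun (z : U1) (b : U2) => f z).
Proof. by move=> hf a z b z' b'; rewrite hf. Qed.
Lemma jlin_r (f : U2 -> V) : linear_fun R f -> jlin (fun (z : U1) (b : U2) => f b).
Proof. by move=> hf a z b z' b'; rewrite hf. Qed.
End JLin.

Lemma zmod_id1 (V : zmodType) (X Y b : V) : X - Y + (b - X + Y) = b.
Proof. by rewrite addrC addrA [b - X + Y + X]addrAC subrK addrK. Qed.

Section Back.
Variables (E B : DGMod R) (p : gmap E B) (hp : is_chain_map p) (q : gmap B E)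
  (hq : is_chain_map q) (t : forall k, B k -> E k) (ht : forall k, linear_fun R (t k))
  (pt : forall k y, p k (t k y) = y)
  (H : forall i j, E i -> E j) (HL : forall i j, linear_fun R (H i j))
  (Hh : forall i x, q i (p i x) - x = dd E (i+1) i (H i (i+1) x) + H (i-1) i (dd E i (i-1) x))
  (G : forall i j, B i -> B j) (GL : forall i j, linear_fun R (G i j))
  (Gh : forall i x, p i (q i x) - x = dd B (i+1) i (G i (i+1) x) + G (i-1) i (dd B i (i-1) x)).

Definition rr {k} (z : E (k-1)) (b : B k) : B k :=
  b - p k (q k b) + p k (H (k-1) k z).
Definition e_at {k} (z : E (k-1)) (b : B k) : E k :=
  q k b - H (k-1) k z + q k (rr z b) - dd E (k+1) k (t (k+1) (G k (k+1) (rr z b))).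

Lemma rr_jlin k : jlin (@rr k).
Proof.
apply: jlin_add; first apply: jlin_add.
- exact: jlin_r.
- apply: jlin_opp; apply: jlin_comp; first exact: hp.1.
  apply: jlin_comp; first exact: hq.1.
  exact: jlin_r.
apply: jlin_comp; first exact: hp.1.
apply: jlin_l; exact: HL.
Qed.

Lemma e_jlin k : jlin (@e_at k).
Proof.
apply: jlin_add; first apply: jlin_add; first apply: jlin_add.
- apply: jlin_r; exact: hq.1.
- apply: jlin_opp; apply: jlin_l; exact: HL.
- apply: jlin_comp; first exact: hq.1. exact: rr_jlin.
apply: jlin_opp; apply: jlin_comp; first exact: dg_d_lin.
apply: jlin_comp; first exact: ht.
apply: jlin_comp; first exact: GL.
exact: rr_jlin.
Qed.

Section Fix.
Variables (k : int) (z : E (k-1)) (b : B k).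
Hypotheses (hz : dd E (k-1) (k-1-1) z = 0) (hpz : p (k-1) z = dd B k (k-1) b).

Lemma dHz : dd E k (k-1) (H (k-1) k z) = q (k-1) (p (k-1) z) - z.
Proof.
have := Hh _ z; rewrite subrK hz (lin0 (HL _ _)) addr0 => ->; done.
Qed.

Lemma drr : dd B k (k-1) (rr z b) = 0.
Proof.
rewrite /rr (linD (dg_d_lin _ _ _ _)) (linB (dg_d_lin _ _ _ _)).
rewrite -!hp.2 dHz -hq.2 -hpz (linB (hp.1 _)).
by rewrite addrA subrK subrr.
Qed.

Lemma e_d : dd E k (k-1) (e_at z b) = z.
Proof.
rewrite /e_at (linB (dg_d_lin _ _ _ _)) dg_dd subr0.
rewrite (linD (dg_d_lin _ _ _ _)) (linB (dg_d_lin _ _ _ _)) dHz.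
rewrite -!hq.2 drr (lin0 (hq.1 _)) addr0 -hpz.
by rewrite opprB addrCA subrr addr0.
Qed.

Lemma e_p : p k (e_at z b) = b.
Proof.
have h1 := Gh _ (rr z b); rewrite drr (lin0 (GL _ _)) addr0 in h1.
move/eqP: h1; rewrite subr_eq => /eqP h1.
rewrite /e_at (linB (hp.1 _)) hp.2 pt (linD (hp.1 _)) h1 (linB (hp.1 _)).
rewrite [_ + rr z b]addrC addrA addrK /rr.
exact: zmod_id1.
Qed.
End Fix.

Section RLP.
Variable n : int.
Definition Sv (u : gmap (sphere (n-1)) E) (v : gmap (disk n) B) (k : int) : E k :=
  if k == n then e_at (u (k-1) (const_mx 1 : 'rV[R]_((k-1) == (n-1))))
                      (v k (const_mx 1 : 'rV[R]_((k == n) || (k == n-1))))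
  else if k == n-1 then u k (const_mx 1 : 'rV[R]_(k == n-1)) else 0.
Definition sm u v : gmap (disk n) E :=
  fun k y => coef (y : 'rV[R]_((k == n) || (k == n-1))) *: Sv u v k.

Lemma Sv_n u v : Sv u v n = e_at (u (n-1) (const_mx 1 : 'rV[R]_((n-1) == (n-1))))
                      (v n (const_mx 1 : 'rV[R]_((n == n) || (n == n-1)))).
Proof. by rewrite /Sv (ifT _ _ (eqxx n)). Qed.
Lemma Sv_n1 u v : Sv u v (n-1) = u (n-1) (const_mx 1 : 'rV[R]_((n-1) == (n-1))).
Proof. by rewrite /Sv (ifF _ _ (int_neq1 n)) (ifT _ _ (eqxx (n-1))). Qed.
Lemma Sv_o u v k : k != n -> k != n-1 -> Sv u v k = 0.
Proof. by move=> h1 h2; rewrite /Sv (ifN _ _ h1) (ifN _ _ h2). Qed.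

Lemma rlp_back : enriched_rlp (sphere_incl n) p.
Proof.
exists sm; split.
  move=> u v [hu hv hsq].
  have ucyc : forall k l x, dd E k l (u k x) = 0.
    by move=> k l x; rewrite -hu.2 (lin0 (hu.1 _)).
  have hpz0 : p (n-1) (u (n-1) (const_mx 1 : 'rV[R]_((n-1) == (n-1))))
      = dd B n (n-1) (v n (const_mx 1 : 'rV[R]_((n == n) || (n == n-1)))).
    rewrite hsq -hv.2 /= /sphere_incl /disk_d ifT; last by rewrite !eqxx.
    by rewrite !cf_const // ?eqxx ?orbT.
  split.
  - split.
      by move=> k a x y; rewrite /sm coef_lin scalerDl scalerA.
    move=> k l y /=.
    case: (eqVneqP l (k-1)) => [->|Nl]; last first.
      by rewrite disk_d_shape // /sm coef0 scale0r dg_d_shape.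
    case: (eqVneqP k n) => [Ek|Nk].
      subst k; rewrite /disk_d ifT; last by rewrite !eqxx.
      rewrite /sm Sv_n1 Sv_n (linZ (dg_d_lin _ _ _ _)) e_d //.
      by rewrite coef_cf // !eqxx int_neq1.
    rewrite /disk_d ifF; last by rewrite (negbTE Nk).
    rewrite /sm coef0 scale0r.
    case: (eqVneqP k (n-1)) => [Ek1|Nk1].
      by subst k; rewrite Sv_n1 (linZ (dg_d_lin _ _ _ _)) ucyc scaler0.
    by rewrite Sv_o // scaler0 (lin0 (dg_d_lin _ _ _ _)).
  - move=> k x; rewrite /sphere_incl /sm.
    case: (eqVneqP k (n-1)) => [Ek|Nk].
      subst k; rewrite Sv_n1 coef_cf; last by rewrite int_neq1 eqxx.
      by rewrite -(linZ (hu.1 _)) -rv_true.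
    rewrite (@rv_false (k == n-1) x); last exact: negbTE.
    by rewrite /cf conform0 coef0 scale0r (lin0 (hu.1 _)).
  - move=> k y; rewrite /sm.
    case: (eqVneqP k n) => [Ek|Nk].
      subst k; rewrite Sv_n (linZ (hp.1 _)) e_p //.
      by rewrite -(linZ (hv.1 _)) -rv_true // eqxx.
    case: (eqVneqP k (n-1)) => [Ek1|Nk1].
      subst k; rewrite Sv_n1 (linZ (hp.1 _)) hsq /sphere_incl cf_const ?eqxx ?orbT //.
      by rewrite -(linZ (hv.1 _)) -rv_true // eqxx orbT.
    rewrite (@rv_false ((k == n) || (k == n-1)) y); last by rewrite (negbTE Nk) (negbTE Nk1).
    by rewrite coef0 scale0r (lin0 (hp.1 _)) (lin0 (hv.1 _)).
move=> a u v u' v' _ _ k x; rewrite /sm.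
case: (eqVneqP k n) => [Ek|Nk].
  subst k; rewrite !Sv_n /gadd /gscale e_jlin.
  by rewrite scalerDr !scalerA mulrC.
case: (eqVneqP k (n-1)) => [Ek1|Nk1].
  subst k; rewrite !Sv_n1 /gadd /gscale.
  by rewrite scalerDr !scalerA mulrC.
by rewrite !Sv_o // !scaler0 addr0.
Qed.

End RLP.
End Back.

Lemma nn1 (n : int) : n != n - 1. Proof. by rewrite int_neq2. Qed.
Lemma n1n (n : int) : n - 1 != n. Proof. by rewrite int_neq1. Qed.
Lemma tr_ne' M i j x : j != i -> tr M i j x = 0.
Proof. by rewrite eq_sym; exact: tr_ne. Qed.
Lemma tr_tr M i j k x : i = j -> tr M j k (tr M i j x) = tr M i k x.
Proof. by move=> e; subst; rewrite tr_id. Qed.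

Section Fwd.
Variables (E B : DGMod R) (p : gmap E B) (hp : is_chain_map p)
  (s : forall n, gmap (sphere (n-1)) E -> gmap (disk n) B -> gmap (disk n) E)
  (hs1 : forall n u v, in_sq R (sphere_incl n) p u v ->
       [/\ is_chain_map (s n u v),
           (forall k x, s n u v k (sphere_incl n k x) = u k x) &
           (forall k x, p k (s n u v k x) = v k x)])
  (hs2 : forall n (a : R) u v u' v', in_sq R (sphere_incl n) p u v -> in_sq R (sphere_incl n) p u' v' ->
       forall k x, s n (gadd R (gscale R a u) u') (gadd R (gscale R a v) v') k x
                   = a *: s n u v k x + s n u' v' k x).

Definition U {n} (z : E (n-1)) : gmap (sphere (n-1)) E :=
  fun k y => coef (y : 'rV[R]_(k == n-1)) *: tr E (n-1) k z.
Definition V {n} (b : B n) : gmap (disk n) B :=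
  fun k y => coef (y : 'rV[R]_((k == n) || (k == n-1))) *:
     (tr B n k b + tr B (n-1) k (dd B n (n-1) b)).

Lemma UV_sq n z b : dd E (n-1) (n-1-1) z = 0 -> p (n-1) z = dd B n (n-1) b ->
  in_sq R (sphere_incl n) p (U z) (V b).
Proof.
move=> hz hpz; split.
- split; first by move=> k a x y; rewrite /U coef_lin scalerDl scalerA.
  move=> k l y /=; rewrite /U coef0 scale0r (linZ (dg_d_lin _ _ _ _)).
  case: (eqVneqP k (n-1)) => [Ek|Nk].
    subst k; rewrite tr_id.
    case: (eqVneqP l (n-1-1)) => [El|Nl]; first by subst l; rewrite hz scaler0.
    by rewrite dg_d_shape // scaler0.
  by rewrite tr_ne' // (lin0 (dg_d_lin _ _ _ _)) scaler0.
- split; first by move=> k a x y; rewrite /V coef_lin scalerDl scalerA.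
  move=> k l y /=.
  case: (eqVneqP l (k-1)) => [->|Nl]; last first.
    by rewrite disk_d_shape // /V coef0 scale0r dg_d_shape.
  case: (eqVneqP k n) => [Ek|Nk].
    subst k; rewrite /disk_d ifT; last by rewrite !eqxx.
    rewrite /V (tr_ne B n (n-1)) ?nn1 // !tr_id add0r (tr_ne B (n-1) n) ?n1n // addr0.
    rewrite (linZ (dg_d_lin _ _ _ _)) coef_cf //.
    by rewrite !eqxx int_neq1.
  rewrite /disk_d ifF; last by rewrite (negbTE Nk).
  rewrite /V coef0 scale0r (linZ (dg_d_lin _ _ _ _)).
  case: (eqVneqP k (n-1)) => [Ek1|Nk1].
    subst k; rewrite (tr_ne B n (n-1)) ?nn1 // tr_id add0r dg_dd scaler0 //.
  by rewrite !tr_ne' // addr0 (lin0 (dg_d_lin _ _ _ _)) scaler0.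
- move=> k x; rewrite /U /V /sphere_incl.
  case: (eqVneqP k (n-1)) => [Ek|Nk].
    subst k; rewrite (tr_ne B n (n-1)) ?nn1 // !tr_id add0r (linZ (hp.1 _)) hpz.
    by rewrite coef_cf // int_neq1 eqxx.
  rewrite (@rv_false (k == n-1) x); last exact: negbTE.
  by rewrite /cf conform0 !coef0 !scale0r (lin0 (hp.1 _)).
Qed.

Definition sig {n} (z : E (n-1)) (b : B n) : E n :=
  s n (U z) (V b) n (const_mx 1 : 'rV[R]_((n == n) || (n == n-1))).

Section SigFix.
Variables (n : int) (z : E (n-1)) (b : B n).
Hypotheses (hz : dd E (n-1) (n-1-1) z = 0) (hpz : p (n-1) z = dd B n (n-1) b).

Lemma sig_d : dd E n (n-1) (sig z b) = z.
Proof.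
have [h1 h2 h3] := hs1 _ _ _ (UV_sq _ _ _ hz hpz).
rewrite /sig -h1.2 /= /disk_d ifT; last by rewrite !eqxx.
have -> : cf R (const_mx 1 : 'rV[R]_((n == n) || (n == n-1)))
   = sphere_incl n (n-1) (const_mx 1 : 'rV[R]_((n - 1 == n-1))).
  by rewrite /sphere_incl !cf_const // ?eqxx ?orbT.
by rewrite h2 /U coef_const tr_id eqxx scale1r.
Qed.

Lemma sig_p : p n (sig z b) = b.
Proof.
have [h1 h2 h3] := hs1 _ _ _ (UV_sq _ _ _ hz hpz).
rewrite /sig h3 /V coef_const tr_id (tr_ne B (n-1) n) ?n1n // addr0.
by rewrite eqxx scale1r.
Qed.
End SigFix.
Arguments sig_d {n z b}.
Arguments sig_p {n z b}.

Lemma sig_lin n a z b z' b' :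
  dd E (n-1) (n-1-1) z = 0 -> p (n-1) z = dd B n (n-1) b ->
  dd E (n-1) (n-1-1) z' = 0 -> p (n-1) z' = dd B n (n-1) b' ->
  sig (a *: z + z') (a *: b + b') = a *: sig z b + sig z' b'.
Proof.
move=> hz hpz hz' hpz'; rewrite /sig.
have -> : U (a *: z + z') = gadd R (gscale R a (U z)) (U z').
  apply: functional_extensionality_dep => k; apply: functional_extensionality => y.
  by rewrite /gadd /gscale /U tr_lin scalerDr !scalerA mulrC.
have -> : V (a *: b + b') = gadd R (gscale R a (V b)) (V b').
  apply: functional_extensionality_dep => k; apply: functional_extensionality => y.
  rewrite /gadd /gscale /V (dg_d_lin _ _ _ _) !tr_lin.
  by rewrite addrACA -[a *: tr B n k b + _]scalerDr [coef y *: (_ + _)]scalerDr !scalerA mulrC.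
exact: (hs2 _ _ _ _ _ _ (UV_sq _ _ _ hz hpz) (UV_sq _ _ _ hz' hpz')).
Qed.

Lemma sig00 n : sig (0 : E (n-1)) (0 : B n) = 0.
Proof.
have hz : dd E (n-1) (n-1-1) (0 : E (n-1)) = 0 by exact: lin0 (dg_d_lin _ _ _ _).
have hpz : p (n-1) 0 = dd B n (n-1) (0 : B n).
  by rewrite (lin0 (hp.1 _)) (lin0 (dg_d_lin _ _ _ _)).
have h := @sig_lin n (-1) 0 0 0 0 hz hpz hz hpz.
by rewrite !scaler0 !addr0 scaleN1r addNr in h.
Qed.

Lemma sig_d' n m (z : E (n-1)) (b : B n) :
  dd E (n-1) (n-1-1) z = 0 -> p (n-1) z = dd B n (n-1) b -> m = n - 1 ->
  dd E n m (sig z b) = tr E (n-1) m z.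
Proof. by move=> hz hpz ->; rewrite tr_id sig_d. Qed.

Lemma sig_lin0b n a (z z' : E (n-1)) :
  dd E (n-1) (n-1-1) z = 0 -> p (n-1) z = 0 ->
  dd E (n-1) (n-1-1) z' = 0 -> p (n-1) z' = 0 ->
  sig (a *: z + z') (0 : B n) = a *: sig z (0 : B n) + sig z' (0 : B n).
Proof.
move=> hz hpz hz' hpz'.
have e : dd B n (n-1) (0 : B n) = 0 by exact: lin0 (dg_d_lin _ _ _ _).
have h := @sig_lin n a z 0 z' 0 hz (etrans hpz (esym e)) hz' (etrans hpz' (esym e)).
by rewrite scaler0 addr0 in h.
Qed.

Lemma sig_lin0z n a (b b' : B n) :
  dd B n (n-1) b = 0 -> dd B n (n-1) b' = 0 ->
  sig (0 : E (n-1)) (a *: b + b') = a *: sig (0 : E (n-1)) b + sig (0 : E (n-1)) b'.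
Proof.
move=> hb hb'.
have hz : dd E (n-1) (n-1-1) (0 : E (n-1)) = 0 by exact: lin0 (dg_d_lin _ _ _ _).
have p0 : p (n-1) 0 = 0 by exact: lin0 (hp.1 _).
have h := @sig_lin n a 0 b 0 b' hz (etrans p0 (esym hb)) hz (etrans p0 (esym hb')).
by rewrite scaler0 addr0 in h.
Qed.

Definition inner {k} (b : B k) : E (k-1) := sig (0 : E (k-1-1)) (dd B k (k-1) b).
Definition T {k} (b : B k) : E k := sig (inner b) b.

Lemma inner_hz k : dd E (k-1-1) (k-1-1-1) (0 : E (k-1-1)) = 0.
Proof. exact: lin0 (dg_d_lin _ _ _ _). Qed.
Lemma inner_hpz {k} (b : B k) : p (k-1-1) 0 = dd B (k-1) (k-1-1) (dd B k (k-1) b).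
Proof. by rewrite dg_dd (lin0 (hp.1 _)). Qed.
Lemma inner_d {k} (b : B k) : dd E (k-1) (k-1-1) (inner b) = 0.
Proof. exact: (sig_d (inner_hz k) (inner_hpz b)). Qed.
Lemma inner_p {k} (b : B k) : p (k-1) (inner b) = dd B k (k-1) b.
Proof. exact: (sig_p (inner_hz k) (inner_hpz b)). Qed.
Lemma T_p k (b : B k) : p k (T b) = b.
Proof. exact: (sig_p (inner_d b) (inner_p b)). Qed.
Lemma T_d k (b : B k) : dd E k (k-1) (T b) = inner b.
Proof. exact: (sig_d (inner_d b) (inner_p b)). Qed.
Lemma inner_lin k : linear_fun R (@inner k).
Proof.
move=> a x y; rewrite /inner (dg_d_lin _ _ _ _) sig_lin0z //; exact: dg_dd.
Qed.
Lemma T_lin k : linear_fun R (@T k).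
Proof.
move=> a x y; rewrite /T inner_lin sig_lin //.
- exact: inner_d.
- exact: inner_p.
- exact: inner_d.
- exact: inner_p.
Qed.
Lemma T_chain k l (b : B k) : T (dd B k l b) = dd E k l (T b).
Proof.
case: (eqVneqP l (k-1)) => [El|Nl]; last first.
  by rewrite !dg_d_shape // (lin0 (T_lin _)).
subst l; rewrite T_d /T /inner dg_dd sig00.
done.
Qed.

Definition W {i} (x : E i) : E i := T (p i x) - x.
Lemma W_lin i : linear_fun R (@W i).
Proof.
apply: lin_add; last by apply: lin_opp; exact: lin_id.
apply: lin_comp; [exact: T_lin | exact: hp.1].
Qed.
Lemma W_d i l (x : E i) : dd E i l (W x) = W (dd E i l x).
Proof. by rewrite /W (linB (dg_d_lin _ _ _ _)) -T_chain hp.2. Qed.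
Lemma W_p i (x : E i) : p i (W x) = 0.
Proof. by rewrite /W (linB (hp.1 _)) T_p subrr. Qed.

Lemma Wd_hz i (x : E i) : dd E (i-1) (i-1-1) (W (dd E i (i-1) x)) = 0.
Proof. by rewrite W_d dg_dd (lin0 (W_lin _)). Qed.
Lemma Wd_hpz i (x : E i) : p (i-1) (W (dd E i (i-1) x)) = dd B i (i-1) 0.
Proof. by rewrite W_p (lin0 (dg_d_lin _ _ _ _)). Qed.

Definition Y {i} (x : E i) : E i := W x - sig (W (dd E i (i-1) x)) (0 : B i).
Lemma Y_lin i : linear_fun R (@Y i).
Proof.
move=> a x y; rewrite /Y (dg_d_lin _ _ _ _) !W_lin sig_lin0b.
- by rewrite [a *: (W x - _)]scalerBr opprD addrACA.
- exact: Wd_hz.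
- exact: W_p.
- exact: Wd_hz.
- exact: W_p.
Qed.
Lemma Y_d i (x : E i) : dd E i (i-1) (Y x) = 0.
Proof.
rewrite /Y (linB (dg_d_lin _ _ _ _)) W_d sig_d ?subrr //.
- exact: Wd_hz.
- exact: Wd_hpz.
Qed.
Lemma Y_p i (x : E i) : p i (Y x) = 0.
Proof.
rewrite /Y (linB (hp.1 _)) W_p sig_p ?subrr //.
- exact: Wd_hz.
- exact: Wd_hpz.
Qed.

Definition hh i j (x : E i) : E j := sig (tr E i (j-1) (Y x)) (0 : B j).
Lemma hh_hz i j (x : E i) : dd E (j-1) (j-1-1) (tr E i (j-1) (Y x)) = 0.
Proof.
case: (eqVneqP i (j-1)) => [Ei|Ni]; first by subst i; rewrite tr_id Y_d.
by rewrite tr_ne // (lin0 (dg_d_lin _ _ _ _)).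
Qed.
Lemma hh_p i j (x : E i) : p (j-1) (tr E i (j-1) (Y x)) = 0.
Proof.
case: (eqVneqP i (j-1)) => [Ei|Ni]; first by subst i; rewrite tr_id Y_p.
by rewrite tr_ne // (lin0 (hp.1 _)).
Qed.
Lemma hh_lin i j : linear_fun R (@hh i j).
Proof.
move=> a x y; rewrite /hh Y_lin tr_lin sig_lin0b //.
- exact: hh_hz.
- exact: hh_p.
- exact: hh_hz.
- exact: hh_p.
Qed.
Lemma hh_shape i j (x : E i) : j != i + 1 -> hh i j x = 0.
Proof.
move=> h; rewrite /hh tr_ne ?sig00 //.
by apply: contra h => /eqP ->; rewrite subrK.
Qed.
Lemma hh_htpy i (x : E i) :
  T (p i x) - x = dd E (i+1) i (hh i (i+1) x) + hh (i-1) i (dd E i (i-1) x).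
Proof.
rewrite /hh sig_d'; first last.
- by rewrite addrK.
- rewrite (lin0 (dg_d_lin _ _ _ _)); exact: hh_p.
- exact: hh_hz.
rewrite tr_tr; last by rewrite addrK.
rewrite !tr_id {2}/Y dg_dd (lin0 (W_lin _)) sig00 subr0.
by rewrite /Y subrK.
Qed.

Lemma fwd_main : degreewise_split_epi p /\ chain_htpy_equiv p.
Proof.
split.
  move=> k; exists (@T k); split; [exact: T_lin | exact: T_p].
exists (fun k => @T k); split.
  split; [exact: T_lin | move=> k l x; exact: T_chain].
split.
  exists hh; split; first exact: hh_lin.
  split; first exact: hh_shape.
  move=> i x; rewrite /gcomp /gid; exact: hh_htpy.
exists (fun i j (x : B i) => (0 : B j)); split.
  by move=> i j a x y; rewrite scaler0 addr0.
split; first by [].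
move=> i x; rewrite /gcomp /gid T_p subrr (lin0 (dg_d_lin _ _ _ _)) addr0 //.
Qed.

End Fwd.
End Prelim.

Theorem lemma2p9 (R : comPzRingType) (E B : DGMod R) (p : gmap E B)
  (hp : is_chain_map p) :
  (forall n : int, enriched_rlp (@sphere_incl R n) p) <->
  (degreewise_split_epi p /\ chain_htpy_equiv p).
Proof.
split.
- move=> hs.
  pose ss n := proj1_sig (constructive_indefinite_description _ (hs n)).
  have hss n := proj2_sig (constructive_indefinite_description _ (hs n)).
  apply: (@fwd_main R E B p hp ss).
  + move=> n u v h; exact: ((hss n).1 u v h).
  + move=> n a u v u' v' h h'; exact: ((hss n).2 a u v u' v' h h').
- move=> [hsplit [q [hq [[H [HL [_ Hh]]] [G [GL [_ Gh]]]]]]].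
  pose t k := proj1_sig (constructive_indefinite_description _ (hsplit k)).
  have ht k := proj2_sig (constructive_indefinite_description _ (hsplit k)).
  exact: (@rlp_back R E B p hp q hq t (fun k => (ht k).1) (fun k => (ht k).2)
            H HL Hh G GL Gh).
Qed.
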